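(* Let $T>0$, let $H:\mathbb{R}^n\times\mathbb{R}^n\to\mathbb{R}$ satisfy: $p\mapsto H(x,p)$ convex for every $x$, and for some $M\geqslant0$, $|H(x,p)-H(x,q)|\leqslant M(1+|x|)|p-q|$ and $|H(x,p)-H(y,p)|\leqslant M(1+|p|)|x-y|$ for all $x,y,p,q\in\mathbb{R}^n$. Let $g_0,g_T\in C(\mathbb{R}^n,\mathbb{R})$, let $L(x,v)=\sup_{p\in\mathbb{R}^n}\{\langle v,p\rangle-H(x,p)\}$, and define $U(t_0,x_0)=\inf\{g_0(x(0))+\int_0^{t_0}L(x(s),\dot x(s))\,ds \mid x\in\mathcal{A}([0,t_0],\mathbb{R}^n),\ x(t_0)=x_0\}$, $W(t_0,x_0)=\sup\{g_T(x(T))-\int_{t_0}^{T}L(x(s),\dot x(s))\,ds \mid x\in\mathcal{A}([t_0,T],\mathbb{R}^n),\ x(t_0)=x_0\}$. If $\bar x\in\mathcal{A}([0,T],\mathbb{R}^n)$ is a maximal optimal trajectory in the Bolza problem and $U(T,\cdot)=W(T,\cdot)$, then $\bar x$ is a maximal optimal trajectory in the inverse Bolza problem and $U(t,\bar x(t))=W(t,\bar x(t))$ for all $t\in[0,T]$.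
   Context: $\mathcal{A}([a,b],\mathbb{R}^n)$ denotes the absolutely continuous functions $[a,b]\to\mathbb{R}^n$. An $\bar x\in\mathcal{A}([0,T],\mathbb{R}^n)$ is a maximal optimal trajectory in the Bolza problem if $U(T,\bar x(T))=U(0,\bar x(0))+\int_0^T L(\bar x(s),\dot{\bar x}(s))\,ds$; an $\tilde x\in\mathcal{A}([0,T],\mathbb{R}^n)$ is a maximal optimal trajectory in the inverse Bolza problem if $W(0,\tilde x(0))=W(T,\tilde x(T))-\int_0^T L(\tilde x(s),\dot{\tilde x}(s))\,ds$. *)

(* Defs.v *)
From HB Require Import structures.
From mathcomp Require Import all_boot all_order all_algebra.
From mathcomp Require Import all_classical all_reals all_analysis.
Set Implicit Arguments. Unset Strict Implicit. Unset Printing Implicit Defensive.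
Import Order.TTheory GRing.Theory Num.Theory.
Import numFieldNormedType.Exports.
Local Open Scope classical_set_scope.
Local Open Scope ring_scope.

Section Bolza.
Variables (R : realType) (n : nat).
Notation vec := 'rV[R]_n.

Definition dotp (v p : vec) : R := \sum_(i < n) v ord0 i * p ord0 i.
Definition enorm (x : vec) : R := Num.sqrt (\sum_(i < n) x ord0 i ^+ 2).

Definition abs_cont (a b : R) (f : R -> vec) : Prop :=
  forall e : R, 0 < e -> exists2 d : R, 0 < d &
    forall (k : nat) (u v : nat -> R),
      (forall i, (i < k)%N -> a <= u i /\ u i <= v i /\ v i <= b) ->
      (forall i j, (i < k)%N -> (j < k)%N -> i <> j -> v i <= u j \/ v j <= u i) ->
      \sum_(i < k) (v i - u i) < d ->
      \sum_(i < k) enorm (f (v i) - f (u i)) < e.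

(* componentwise derivative (defined a.e. for absolutely continuous paths) *)
Definition dpath (x : R -> vec) (s : R) : vec :=
  \row_(i < n) derive1 (fun t => x t ord0 i) s.

Definition lagr (H : vec -> vec -> R) (x v : vec) : \bar R :=
  ereal_sup [set ((dotp v p - H x p)%:E) | p in [set: vec]].

Definition action (H : vec -> vec -> R) (a b : R) (x : R -> vec) : \bar R :=
  (\int[@lebesgue_measure R]_(s in `[a, b]) lagr H (x s) (dpath x s))%E.

Definition valU (H : vec -> vec -> R) (g0 : vec -> R) (t0 : R) (x0 : vec) : \bar R :=
  ereal_inf [set ((g0 (x 0))%:E + action H 0 t0 x)%E
            | x in [set x | abs_cont 0 t0 x /\ x t0 = x0]].

Definition valW (H : vec -> vec -> R) (gT : vec -> R) (T : R) (t0 : R) (x0 : vec)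
  : \bar R :=
  ereal_sup [set ((gT (x T))%:E - action H t0 T x)%E
            | x in [set x | abs_cont t0 T x /\ x t0 = x0]].

Definition bolza_max_opt (H : vec -> vec -> R) (g0 : vec -> R) (T : R)
  (xb : R -> vec) : Prop :=
  abs_cont 0 T xb /\
  valU H g0 T (xb T) = (valU H g0 0%R (xb 0%R) + action H 0%R T xb)%E.

Definition inv_bolza_max_opt (H : vec -> vec -> R) (gT : vec -> R) (T : R)
  (xb : R -> vec) : Prop :=
  abs_cont 0 T xb /\
  valW H gT T 0%R (xb 0%R) = (valW H gT T T (xb T) - action H 0%R T xb)%E.

End Bolza.

(* Main.v *)
Require Import Defs.
From HB Require Import structures.
From mathcomp Require Import all_boot all_order all_algebra.
From mathcomp Require Import all_classical all_reals all_analysis.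
From mathcomp Require Import ring lra.
Import Order.TTheory GRing.Theory Num.Theory.
Import numFieldNormedType.Exports.
Local Open Scope classical_set_scope.
Local Open Scope ring_scope.
Section IntAdd.
Context {R : realType}.
Local Notation mu := (@lebesgue_measure R).
Local Open Scope ereal_scope.
Import HBNNSimple.

Lemma sup_add_le (S : set (\bar R)) (x c : \bar R) :
  S 0 -> (forall s, S s -> 0 <= s) -> 0 <= x ->
  (forall s, S s -> x + s <= c) -> x + ereal_sup S <= c.
Proof.
move=> S0 Sge0 x0 H.
have xc : x <= c by have := H 0 S0; rewrite adde0.
case: c H xc => [c| |] H xc; last 2 first.
- by rewrite leey.
- by move: xc; rewrite leeNy_eq => /eqP xNy; move: x0; rewrite xNy.
case: x x0 H xc => [x| |] x0 H xc; last 2 first.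
- by [].
- by [].
rewrite -lee_suber_addl //.
apply: ge_ereal_sup => s Ss; rewrite lee_suber_addl //; exact: H.
Qed.

Lemma sup_add2_le (S1 S2 : set (\bar R)) (c : \bar R) :
  S1 0 -> (forall s, S1 s -> 0 <= s) ->
  S2 0 -> (forall s, S2 s -> 0 <= s) ->
  (forall a b, S1 a -> S2 b -> a + b <= c) -> ereal_sup S1 + ereal_sup S2 <= c.
Proof.
move=> S10 S1ge S20 S2ge H.
apply: sup_add_le => //.
  by apply: le_trans (ereal_sup_ubound S10).
move=> b S2b; rewrite addeC; apply: sup_add_le => //; first exact: S2ge.
by move=> a S1a; rewrite addeC; exact: H.
Qed.

Lemma ge0_integral_setU_nm (A B : set R) (f : R -> \bar R) :
  measurable A -> measurable B -> A `&` B = set0 -> (forall x, 0 <= f x) ->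
  \int[mu]_(x in A `|` B) f x = \int[mu]_(x in A) f x + \int[mu]_(x in B) f x.
Proof.
move=> mA mB AB0 f0.
rewrite !ge0_integralE //.
have hA (h : {nnsfun measurableTypeR R >-> R}) (D : set (measurableTypeR R)) x : (forall y, (h y)%:E <= (f \_ D) y) -> ~ D x -> h x = 0%R.
  move=> hle Dx; apply/eqP; rewrite eq_le fun_ge0 andbT -lee_fin.
  by have := hle x; rewrite patchE ifF //; apply/negbTE; rewrite notin_setE.
apply/eqP; rewrite eq_le; apply/andP; split.
- apply: ge_ereal_sup => _ [h hle <-].
  have eqh : sintegral mu h = sintegral mu (proj_nnsfun h mA) + sintegral mu (proj_nnsfun h mB).
    rewrite -sintegralD; apply: eq_sintegral => x /=.
    rewrite !measurable_realfun.mindicE.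
    case: (boolP (x \in A)) => xA; case: (boolP (x \in B)) => xB.
    + exfalso; move: xA xB; rewrite !inE => xA xB.
      by have : (A `&` B) x by []; rewrite AB0.
    + by rewrite mulr1 mulr0 addr0.
    + by rewrite mulr1 mulr0 add0r.
    + rewrite !mulr0 addr0.
      have nAB : ~ (A `|` B) x.
        by move=> -[/mem_set|/mem_set]; [rewrite (negbTE xA)|rewrite (negbTE xB)].
      have := hA h (A `|` B) x hle nAB. by [].
  rewrite eqh; apply: leeD; apply: ereal_sup_ubound; [exists (proj_nnsfun h mA)|exists (proj_nnsfun h mB)] => // x /=;
    rewrite measurable_realfun.mindicE !patchE; case: ifP => xD; rewrite ?mulr1 ?mulr0 //; have := hle x;
    rewrite !patchE ifT // inE; [left|right]; by rewrite -inE.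
- apply: sup_add2_le.
  + exists nnsfun0; last by rewrite sintegral0.
    by move=> x /=; rewrite patchE; case: ifP => // _; rewrite f0.
  + by move=> _ [h _ <-]; exact: sintegral_ge0.
  + exists nnsfun0; last by rewrite sintegral0.
    by move=> x /=; rewrite patchE; case: ifP => // _; rewrite f0.
  + by move=> _ [h _ <-]; exact: sintegral_ge0.
  move=> _ _ [h1 h1le <-] [h2 h2le <-]; rewrite -sintegralD.
  apply: ereal_sup_ubound; exists (add_nnsfun h1 h2) => // x /=.
  rewrite patchE; case: (boolP (x \in A `|` B)) => xAB.
  + move: (xAB); rewrite inE => -[xA|xB].
    * have -> : h2 x = 0%R.
        apply: (hA _ _ _ h2le) => xB.
        by have : (A `&` B) x by []; rewrite AB0.
      by rewrite addr0; have := h1le x; rewrite patchE ifT // inE.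
    * have -> : h1 x = 0%R.
        apply: (hA _ _ _ h1le) => xA.
        by have : (A `&` B) x by []; rewrite AB0.
      by rewrite add0r; have := h2le x; rewrite patchE ifT // inE.
  + have nA : ~ A x by move=> xA; move: xAB => /negP; apply; apply/mem_set; left.
    have nB : ~ B x by move=> xB; move: xAB => /negP; apply; apply/mem_set; right.
    by rewrite (hA _ _ _ h1le nA) (hA _ _ _ h2le nB) addr0.
Qed.
Lemma le_integral_nm (D : set R) (f g : R -> \bar R) :
  (forall x, D x -> 0 <= f x) -> (forall x, D x -> f x <= g x) ->
  \int[mu]_(x in D) f x <= \int[mu]_(x in D) g x.
Proof.
move=> f0 fg.
have g0 : forall x, D x -> 0 <= g x by move=> x Dx; exact: le_trans (f0 _ Dx) (fg _ Dx).
rewrite !ge0_integralE //; apply: ereal_sup_le => _ [h hle <-]; exists h => // x.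
apply: le_trans (hle x) _; rewrite !patchE; case: ifP => // /set_mem; exact: fg.
Qed.

Lemma integral_setU_nm (A B : set R) (f : R -> \bar R) :
  measurable A -> measurable B -> A `&` B = set0 ->
  \int[mu]_(x in A) f^\- x \is a fin_num -> \int[mu]_(x in B) f^\- x \is a fin_num ->
  \int[mu]_(x in A `|` B) f x = \int[mu]_(x in A) f x + \int[mu]_(x in B) f x.
Proof.
move=> mA mB AB0 nA nB.
rewrite [in LHS]integralE [X in _ = X + _]integralE [X in _ = _ + X]integralE.
rewrite !ge0_integral_setU_nm //; try exact: funepos_ge0; try exact: funeneg_ge0.
rewrite fin_num_oppeD // addeACA //.
Qed.

Lemma integral_neg_bound (D : set R) (f : R -> \bar R) (C : R) :
  measurable D -> (0 <= C)%R -> (forall x, D x -> (- C)%:E <= f x) ->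
  \int[mu]_(x in D) f^\- x <= C%:E * mu D.
Proof.
move=> mD C0 fC.
rewrite -integral_cst //; apply: le_integral_nm => x Dx; first exact: funeneg_ge0.
have := @funeneg_le _ _ D (cst (- C)%:E) f.
move=> /(_ _ x (mem_set Dx)) /=.
have -> : (cst (- C)%:E)^\- x = C%:E.
  rewrite (@le0_funenegE _ _ setT) ?inE //= ?EFinN ?oppeK //.
  by move=> y _; rewrite /= lee_fin oppr_le0.
by apply => y /set_mem; exact: fC.
Qed.

End IntAdd.
Section Enorm.
Context {R : realType} {n : nat}.
Implicit Types (a b : 'I_n -> R).

Lemma cs_sq a b : (\sum_i a i * b i) ^+ 2 <= (\sum_i a i ^+ 2) * (\sum_i b i ^+ 2).
Proof.
have H : 0 <= \sum_i \sum_j (a i * b j - a j * b i) ^+ 2.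
  by apply: sumr_ge0 => i _; apply: sumr_ge0 => j _; exact: sqr_ge0.
have E : \sum_i \sum_j (a i * b j - a j * b i) ^+ 2 =
   2 * ((\sum_i a i ^+ 2) * (\sum_i b i ^+ 2) - (\sum_i a i * b i) ^+ 2).
  have E1 : forall i j, (a i * b j - a j * b i) ^+ 2 =
      a i ^+ 2 * b j ^+ 2 + a j ^+ 2 * b i ^+ 2 - 2 * ((a i * b i) * (a j * b j)).
    by move=> i j; ring.
  have L : \sum_i \sum_j (a i * b j - a j * b i) ^+ 2 =
     \sum_i \sum_j a i ^+ 2 * b j ^+ 2 + \sum_i \sum_j a j ^+ 2 * b i ^+ 2
     - 2 * \sum_i \sum_j (a i * b i) * (a j * b j).
    rewrite [in RHS]mulr_sumr -[in RHS]big_split -[in RHS]sumrB /=.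
    apply: eq_bigr => i _; rewrite [in RHS]mulr_sumr -[in RHS]big_split -[in RHS]sumrB /=.
    by apply: eq_bigr => j _; rewrite E1.
  rewrite L.
  have P1 : \sum_i \sum_j a i ^+ 2 * b j ^+ 2 = (\sum_i a i ^+ 2) * (\sum_i b i ^+ 2).
    by rewrite big_distrlr.
  have P2 : \sum_i \sum_j a j ^+ 2 * b i ^+ 2 = (\sum_i a i ^+ 2) * (\sum_i b i ^+ 2).
    by rewrite exchange_big big_distrlr.
  have P3 : \sum_i \sum_j (a i * b i) * (a j * b j) = (\sum_i a i * b i) ^+ 2.
    by rewrite expr2 big_distrlr.
  rewrite P1 P2 P3; ring.
rewrite E in H; move: H; rewrite pmulr_rge0 // subr_ge0 //.
Qed.
Lemma cs a b : \sum_i a i * b i <=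
  Num.sqrt (\sum_i a i ^+ 2) * Num.sqrt (\sum_i b i ^+ 2).
Proof.
have A0 : 0 <= \sum_i a i ^+ 2 by apply: sumr_ge0 => i _; exact: sqr_ge0.
have B0 : 0 <= \sum_i b i ^+ 2 by apply: sumr_ge0 => i _; exact: sqr_ge0.
apply: le_trans (ler_norm _) _.
rewrite -sqrtrM // -sqrtr_sqr ler_sqrt ?mulr_ge0 //; exact: cs_sq.
Qed.

Local Notation vec := 'rV[R]_n.

Lemma enorm_ge0 (x : vec) : 0 <= enorm x.
Proof. exact: sqrtr_ge0. Qed.

Lemma enorm0 : enorm (0 : vec) = 0.
Proof. by rewrite /enorm big1 ?sqrtr0 // => i _; rewrite mxE expr0n. Qed.

Lemma enormD (x y : vec) : enorm (x + y) <= enorm x + enorm y.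
Proof.
rewrite /enorm.
set A := \sum_i x ord0 i ^+ 2; set B := \sum_i y ord0 i ^+ 2.
have A0 : 0 <= A by apply: sumr_ge0 => i _; exact: sqr_ge0.
have B0 : 0 <= B by apply: sumr_ge0 => i _; exact: sqr_ge0.
have S := cs (fun i => x ord0 i) (fun i => y ord0 i).
have E : \sum_i (x + y) ord0 i ^+ 2 = A + B + 2 * \sum_i x ord0 i * y ord0 i.
  rewrite /A /B mulr_sumr -!big_split /=; apply: eq_bigr => i _; rewrite mxE; ring.
rewrite E.
have -> : Num.sqrt A + Num.sqrt B = Num.sqrt ((Num.sqrt A + Num.sqrt B) ^+ 2).
  by rewrite sqrtr_sqr ger0_norm // addr_ge0 // sqrtr_ge0.
rewrite ler_sqrt ?sqr_ge0 //.
have -> : (Num.sqrt A + Num.sqrt B) ^+ 2 = A + B + 2 * (Num.sqrt A * Num.sqrt B).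
  rewrite sqrrD !sqr_sqrtr //; ring.
by rewrite lerD2l ler_pM2l.
Qed.

Lemma enormN (x : vec) : enorm (- x) = enorm x.
Proof. by rewrite /enorm; congr Num.sqrt; apply: eq_bigr => i _; rewrite mxE sqrrN. Qed.

Lemma enormB_sym (x y : vec) : enorm (x - y) = enorm (y - x).
Proof. by rewrite -enormN opprB. Qed.

Lemma ac_pair (a b : R) (x : R -> vec) : abs_cont a b x ->
  exists2 d, 0 < d & forall u v, a <= u -> u <= v -> v <= b -> v - u < d ->
    enorm (x v - x u) < 1.
Proof.
move=> /(_ 1 ltr01) [d d0 H]; exists d => // u v au uv vb vud.
have := H 1%N (fun _ => u) (fun _ => v).
rewrite !big_ord1; apply => //.
by move=> i j; rewrite !ltnS !leqn0 => /eqP -> /eqP ->.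
Qed.

Lemma ac_bound (a b : R) (x : R -> vec) : abs_cont a b x ->
  exists K, forall s, a <= s <= b -> enorm (x s) <= K.
Proof.
move=> /ac_pair [d d0 H].
have d20 : 0 < d / 2 by rewrite divr_gt0.
have step : forall k : nat, forall s, a <= s <= b -> s <= a + k%:R * (d / 2) ->
    enorm (x s - x a) <= k%:R.
  elim => [|k IH] s /andP[ha sb].
    rewrite mul0r addr0 => sa.
    have -> : s = a by apply/le_anti; rewrite sa ha.
    by rewrite subrr enorm0.
  move=> sk.
  have [sk'|sk'] := leP s (a + k%:R * (d / 2)).
    apply: le_trans (IH s _ sk') _; first by rewrite ha sb.
    by rewrite ler_nat.
  set s' := Num.max a (s - d / 2).
  have as' : a <= s' by rewrite le_max lexx.
  have s's : s' <= s by rewrite ge_max ha gerBl ltW.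
  have ss' : s - s' < d.
    have : s - d / 2 <= s' by rewrite le_max lexx orbT.
    lra.
  have s'k : s' <= a + k%:R * (d / 2).
    rewrite ge_max; apply/andP; split.
      by rewrite lerDl mulr_ge0 // ltW.
    move: sk; rewrite -natr1; lra.
  have hs'b : a <= s' <= b by rewrite as' (le_trans s's sb).
  have h1 := IH s' hs'b s'k.
  have h2 := H s' s as' s's sb ss'.
  have -> : x s - x a = (x s - x s') + (x s' - x a) by rewrite addrA subrK.
  apply: le_trans (enormD _ _) _.
  by rewrite -natr1 addrC lerD // ltW.
have [k kP] : exists k : nat, b - a <= k%:R * (d / 2).
  exists (Num.Def.archi_bound ((b - a) / (d / 2))).
  rewrite -ler_pdivrMr //; apply: ltW; apply: unstable.ltr_bound.
exists (enorm (x a) + k%:R) => s /andP[ha sb].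
have -> : x s = (x s - x a) + x a by rewrite subrK.
apply: le_trans (enormD _ _) _; rewrite addrC lerD2l.
apply: step; first by rewrite ha sb.
move: kP; lra.
Qed.
Lemma ac_sub (a b c d : R) (x : R -> vec) : abs_cont a b x -> a <= c -> d <= b ->
  abs_cont c d x.
Proof.
move=> H ac db e e0; have [dl dl0 Hd] := H e e0; exists dl => // k u v hr hdj hs.
apply: Hd => // i ik; have [h1 [h2 h3]] := hr i ik.
by split; [exact: le_trans h1|split=> //; exact: le_trans db].
Qed.

Lemma ac_concat (a t b : R) (z y : R -> vec) : a <= t -> t <= b ->
  abs_cont a t z -> abs_cont t b y -> z t = y t ->
  abs_cont a b (fun s => if s <= t then z s else y s).
Proof.
move=> hat htb Hz Hy zy e e0.
have e20 : 0 < e / 2 by rewrite divr_gt0.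
have [d1 d10 H1] := Hz _ e20; have [d2 d20 H2] := Hy _ e20.
exists (Num.min d1 d2); first by rewrite lt_min d10 d20.
move=> k u v hr hdj hs.
have hsd1 : \sum_(i < k) (v i - u i) < d1.
  by apply: lt_le_trans hs _; rewrite ge_min lexx.
have hsd2 : \sum_(i < k) (v i - u i) < d2.
  by apply: lt_le_trans hs _; rewrite ge_min lexx orbT.
have hs1 : \sum_(i < k) (Num.min (v i) t - Num.min (u i) t) < d1.
  apply: le_lt_trans hsd1.
  apply: ler_sum => i _; have [h1 [h2 h3]] := hr i (ltn_ord i).
  have [c1|c1] := leP (v i) t; have [c2|c2] := leP (u i) t;
    rewrite ?(minEle) ?c1 ?c2 /=; try lra.
have hs2 : \sum_(i < k) (Num.max (v i) t - Num.max (u i) t) < d2.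
  apply: le_lt_trans hsd2.
  apply: ler_sum => i _; have [h1 [h2 h3]] := hr i (ltn_ord i).
  have [c1|c1] := leP (v i) t; have [c2|c2] := leP (u i) t;
    rewrite ?(maxEle) ?c1 ?c2 /=; try lra.
have mmin : forall p q, p <= q -> Num.min p t <= Num.min q t.
  move=> p q pq; have [c1|c1] := leP p t; have [c2|c2] := leP q t;
    rewrite ?(minEle) ?c1 ?c2 /=; try lra.
have mmax : forall p q, p <= q -> Num.max p t <= Num.max q t.
  move=> p q pq; have [c1|c1] := leP p t; have [c2|c2] := leP q t;
    rewrite ?(maxEle) ?c1 ?c2 /=; try lra.
have r1 : forall i, (i < k)%N -> a <= Num.min (u i) t /\ Num.min (u i) t <= Num.min (v i) t /\ Num.min (v i) t <= t.
  move=> i ik; have [h1 [h2 h3]] := hr i ik.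
  by split; [rewrite le_min h1 hat|split; [exact: mmin|rewrite ge_min lexx orbT]].
have j1 : forall i j, (i < k)%N -> (j < k)%N -> i <> j -> Num.min (v i) t <= Num.min (u j) t \/ Num.min (v j) t <= Num.min (u i) t.
  move=> i j ik jk ij; case: (hdj i j ik jk ij) => h; [left|right]; exact: mmin.
have r2 : forall i, (i < k)%N -> t <= Num.max (u i) t /\ Num.max (u i) t <= Num.max (v i) t /\ Num.max (v i) t <= b.
  move=> i ik; have [h1 [h2 h3]] := hr i ik.
  by split; [rewrite le_max lexx orbT|split; [exact: mmax|rewrite ge_max h3 htb]].
have j2 : forall i j, (i < k)%N -> (j < k)%N -> i <> j -> Num.max (v i) t <= Num.max (u j) t \/ Num.max (v j) t <= Num.max (u i) t.
  move=> i j ik jk ij; case: (hdj i j ik jk ij) => h; [left|right]; exact: mmax.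
have S1 := H1 k (fun i => Num.min (u i) t) (fun i => Num.min (v i) t) r1 j1 hs1.
have S2 := H2 k (fun i => Num.max (u i) t) (fun i => Num.max (v i) t) r2 j2 hs2.
have : \sum_(i < k) (enorm (z (Num.min (v i) t) - z (Num.min (u i) t)) +
                     enorm (y (Num.max (v i) t) - y (Num.max (u i) t))) < e.
  by rewrite big_split /= (splitr e) ltrD.
apply: le_lt_trans; apply: ler_sum => i _; have [h1 [h2 h3]] := hr i (ltn_ord i).
have [c1|c1] := leP (v i) t.
  have [c2|c2] := leP (u i) t; last by exfalso; lra.
  by rewrite subrr enorm0 addr0.
have [c2|c2] := leP (u i) t.
  have -> : y (v i) - z (u i) = (z t - z (u i)) + (y (v i) - y t).
    by rewrite zy [in RHS]addrC addrA subrK.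
  exact: enormD.
by rewrite subrr enorm0 add0r.
Qed.
Lemma dpath_near (x y : R -> vec) s : (\forall r \near s, x r = y r) ->
  dpath x s = dpath y s.
Proof.
move=> xy; apply/rowP => i; rewrite !mxE !derive1E; apply: near_eq_derive.
by apply: filterS xy => r ->.
Qed.

Lemma dpath_concatl (z y : R -> vec) t s : s < t ->
  dpath (fun r => if r <= t then z r else y r) s = dpath z s.
Proof.
move=> st; apply: dpath_near; apply: filterS (lt_le_nbhsl st) => r rt.
by rewrite rt.
Qed.

Lemma dpath_concatr (z y : R -> vec) t s : t < s ->
  dpath (fun r => if r <= t then z r else y r) s = dpath y s.
Proof.
move=> ts; apply: dpath_near; apply: filterS (lt_nbhsr ts) => r tr.
by rewrite leNgt tr.
Qed.

Lemma lagr_lb (H : vec -> vec -> R) x v : ((- H x 0)%:E <= lagr H x v)%E.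
Proof.
apply: ereal_sup_ubound; exists 0 => //.
by rewrite /dotp big1 ?sub0r // => i _; rewrite mxE mulr0.
Qed.

Lemma integrand_lb (H : vec -> vec -> R) (M : R) (a b : R) (x : R -> vec) :
  0 <= M ->
  (forall x y p : vec, `|H x p - H y p| <= M * (1 + enorm p) * enorm (x - y)) ->
  abs_cont a b x ->
  exists2 C, 0 <= C & forall s, a <= s <= b -> ((- C)%:E <= lagr H (x s) (dpath x s))%E.
Proof.
move=> M0 HL /ac_bound [K HK].
exists (`|H 0 0| + M * Num.max K 0).
  by rewrite addr_ge0 // mulr_ge0 // le_max lexx orbT.
move=> s hs; apply: le_trans (lagr_lb _ _ _); rewrite lee_fin lerN2.
have h1 := HL (x s) 0 0; rewrite enorm0 addr0 mulr1 subr0 in h1.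
have h2 : H (x s) 0 <= H 0 0 + M * enorm (x s).
  by rewrite -lerBlDl; apply: le_trans (ler_norm _) h1.
apply: le_trans h2 _; apply: lerD; first exact: ler_norm.
by apply: ler_wpM2l => //; rewrite le_max HK.
Qed.

End Enorm.
Section IntSplit.
Context {R : realType}.
Local Notation mu := (@lebesgue_measure R).
Local Open Scope ereal_scope.

Lemma integral_add_pt (D : set R) t (f : R -> \bar R) : measurable D -> ~ D t ->
  \int[mu]_(x in D) f^\- x \is a fin_num ->
  \int[mu]_(x in D `|` [set t]) f x = \int[mu]_(x in D) f x.
Proof.
move=> mD Dt fD; rewrite integral_setU_nm // ?integral_set1 ?adde0 //.
by apply/seteqP; split => // x [Dx /= xt]; apply: Dt; rewrite -xt.
Qed.

Lemma neg_fin_itv (f : R -> \bar R) (C : R) (b1 b2 : bool) (x1 x2 : R) :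
  (0 <= C)%R -> (forall s, [set` Interval (BSide b1 x1) (BSide b2 x2)] s -> (- C)%:E <= f s) ->
  \int[mu]_(x in [set` Interval (BSide b1 x1) (BSide b2 x2)]) f^\- x \is a fin_num.
Proof.
move=> C0 fC; rewrite ge0_fin_numE; last by apply: integral_ge0 => x _; exact: funeneg_ge0.
apply: le_lt_trans (integral_neg_bound _ _ _ (measurable_itv _) C0 fC) _.
rewrite lebesgue_measure_itv /=; case: ifP => _; last by rewrite mule0 ltry.
by rewrite -EFinD -EFinM ltry.
Qed.

Lemma int_left (f : R -> \bar R) (a t C : R) : (a <= t)%R -> (0 <= C)%R ->
  (forall s, (a <= s <= t)%R -> (- C)%:E <= f s) ->
  \int[mu]_(x in `[a, t]) f x = \int[mu]_(x in `[a, t[) f x.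
Proof.
move=> hat C0 fC.
have -> : `[a, t]%classic = `[a, t[%classic `|` [set t] :> set R.
  apply/seteqP; split => x /=; rewrite !in_itv /=.
    by move=> /andP[h1 h2]; have [xt|xt] := eqVneq x t; [right|left; rewrite h1 lt_neqAle xt h2].
  by move=> [/andP[h1 h2]|->]; [rewrite h1 ltW|rewrite hat lexx].
apply: integral_add_pt => //.
  by rewrite /= in_itv /= ltxx andbF.
apply: neg_fin_itv C0 _ => s /=; rewrite in_itv /= => /andP[h1 h2]; apply: fC.
by rewrite h1 ltW.
Qed.

Lemma int_right (f : R -> \bar R) (t b C : R) : (t <= b)%R -> (0 <= C)%R ->
  (forall s, (t <= s <= b)%R -> (- C)%:E <= f s) ->
  \int[mu]_(x in `[t, b]) f x = \int[mu]_(x in `]t, b]) f x.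
Proof.
move=> htb C0 fC.
have -> : `[t, b]%classic = `]t, b]%classic `|` [set t] :> set R.
  apply/seteqP; split => x /=; rewrite !in_itv /=.
    by move=> /andP[h1 h2]; have [xt|xt] := eqVneq x t; [right|left; rewrite h2 lt_neqAle eq_sym xt h1].
  by move=> [/andP[h1 h2]|->]; [rewrite h2 ltW|rewrite htb lexx].
apply: integral_add_pt => //.
  by rewrite /= in_itv /= ltxx.
apply: neg_fin_itv C0 _ => s /=; rewrite in_itv /= => /andP[h1 h2]; apply: fC.
by rewrite h2 ltW.
Qed.

Lemma int_split (f : R -> \bar R) (a t b C : R) : (a <= t)%R -> (t <= b)%R -> (0 <= C)%R ->
  (forall s, (a <= s <= b)%R -> (- C)%:E <= f s) ->
  \int[mu]_(x in `[a, b]) f x = \int[mu]_(x in `[a, t[) f x + \int[mu]_(x in `]t, b]) f x.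
Proof.
move=> hat htb C0 fC.
have -> : `[a, b]%classic = `[a, t]%classic `|` `]t, b]%classic :> set R.
  apply/seteqP; split => x /=; rewrite !in_itv /=.
    by move=> /andP[h1 h2]; have [xt|xt] := leP x t; [left; rewrite h1|right; rewrite h2].
  by move=> [/andP[h1 h2]|/andP[h1 h2]]; [rewrite h1 (le_trans h2 htb)|rewrite h2 (le_trans hat (ltW h1))].
rewrite integral_setU_nm //.
- rewrite (@int_left _ a t C hat C0) // => s /andP[h1 h2]; by apply: fC; rewrite h1 (le_trans h2 htb).
- apply/seteqP; split => // x /= [].
  by rewrite !in_itv /= => /andP[_ h1] /andP[h2 _]; move: (lt_le_trans h2 h1); rewrite ltxx.
- apply: neg_fin_itv C0 _ => s /=; rewrite in_itv /= => /andP[h1 h2]; apply: fC.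
  by rewrite h1 (le_trans h2 htb).
- apply: neg_fin_itv C0 _ => s /=; rewrite in_itv /= => /andP[h1 h2]; apply: fC.
  by rewrite h2 (le_trans hat (ltW h1)).
Qed.

End IntSplit.
Section Main.
Context {R : realType} {n : nat}.
Local Notation vec := 'rV[R]_n.
Local Notation mu := (@lebesgue_measure R).
Local Open Scope ereal_scope.

Lemma ac_cst (a b : R) (x0 : vec) : abs_cont a b (fun _ => x0).
Proof.
move=> e e0; exists 1%R => // k u v _ _ _.
by rewrite big1 // => i _; rewrite subrr enorm0.
Qed.

Lemma action_pt (H : vec -> vec -> R) (a : R) x : action H a a x = 0.
Proof. by rewrite /action set_itv1 integral_set1. Qed.

Variables (H : vec -> vec -> R) (M : R).
Hypothesis M0 : (0 <= M)%R.
Hypothesis HLx : forall x y p : vec, (`|H x p - H y p| <= M * (1 + enorm p) * enorm (x - y))%R.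

Lemma action_gtNy (a b : R) (x : R -> vec) : abs_cont a b x -> -oo < action H a b x.
Proof.
move=> /(integrand_lb H M _ _ _ M0 HLx) [C C0 HC].
have fin : \int[mu]_(s in `[a, b]) (fun s => lagr H (x s) (dpath x s))^\- s \is a fin_num.
  apply: neg_fin_itv C0 _ => s /=; rewrite in_itv /=; exact: HC.
rewrite /action integralE.
have P0 : 0 <= \int[mu]_(s in `[a, b]) (fun s => lagr H (x s) (dpath x s))^\+ s.
  by apply: integral_ge0 => s _; exact: funepos_ge0.
move: P0 fin.
case: (\int[mu]_(s in `[a, b]) _ ^\+ s) => [p| |] //= _;
  move=> /fineK <-; by rewrite ?ltNyr // -EFinB ltNyr.
Qed.

Lemma action_split (x : R -> vec) (t T : R) : abs_cont 0 T x -> (0 <= t)%R -> (t <= T)%R ->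
  action H 0 T x = action H 0 t x + action H t T x.
Proof.
move=> acx t0 tT.
have [C C0 HC] := integrand_lb H M _ _ _ M0 HLx acx.
rewrite /action (int_split _ _ _ _ _ t0 tT C0 HC).
have HC1 : forall s, (0 <= s <= t)%R -> (- C)%:E <= lagr H (x s) (dpath x s).
  by move=> s /andP[h1 h2]; apply: HC; rewrite h1 (le_trans h2 tT).
have HC2 : forall s, (t <= s <= T)%R -> (- C)%:E <= lagr H (x s) (dpath x s).
  by move=> s /andP[h1 h2]; apply: HC; rewrite h2 (le_trans t0 h1).
by rewrite (@int_left _ _ 0 t C t0 C0 HC1) (@int_right _ _ t T C tT C0 HC2).
Qed.

Lemma action_concat (z y : R -> vec) (t T : R) : (0 <= t)%R -> (t <= T)%R ->
  abs_cont 0 t z -> abs_cont t T y -> z t = y t ->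
  action H 0 T (fun s => if (s <= t)%R then z s else y s) = action H 0 t z + action H t T y.
Proof.
move=> t0 tT acz acy zy.
have acw := ac_concat _ _ _ _ _ t0 tT acz acy zy.
have [C C0 HC] := integrand_lb H M _ _ _ M0 HLx acw.
have [Cz Cz0 HCz] := integrand_lb H M _ _ _ M0 HLx acz.
have [Cy Cy0 HCy] := integrand_lb H M _ _ _ M0 HLx acy.
rewrite /action (int_split _ _ _ _ _ t0 tT C0 HC).
have E1 : \int[mu]_(s in `[0%R, t[) lagr H (if (s <= t)%R then z s else y s)
       (dpath (fun s0 : R => if (s0 <= t)%R then z s0 else y s0) s) =
     \int[mu]_(s in `[0%R, t[) lagr H (z s) (dpath z s).
  apply: eq_integral => s /set_mem hs.
  have /andP[h1 h2] : (0 <= s < t)%R by move: hs; rewrite /= in_itv.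
  by rewrite (dpath_concatl z y _ _ h2) (ltW h2).
have E2 : \int[mu]_(s in `]t, T]) lagr H (if (s <= t)%R then z s else y s)
       (dpath (fun s0 : R => if (s0 <= t)%R then z s0 else y s0) s) =
     \int[mu]_(s in `]t, T]) lagr H (y s) (dpath y s).
  apply: eq_integral => s /set_mem hs.
  have /andP[h1 h2] : (t < s <= T)%R by move: hs; rewrite /= in_itv.
  by rewrite (dpath_concatr z y _ _ h1) leNgt h1.
rewrite E1 E2.
by rewrite (@int_left _ _ 0 t Cz t0 Cz0 HCz) (@int_right _ _ t T Cy tT Cy0 HCy).
Qed.

Lemma ar1 (p q : R) (a b : \bar R) : -oo < a -> -oo < b ->
  p%:E <= q%:E + (a + b) -> p%:E - b <= q%:E + a.
Proof.
case: a => [r| |] //; case: b => [s| |] //= _ _.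
all: try by rewrite ?leNye ?leey.
by rewrite -!EFinD !lee_fin; lra.
Qed.

Lemma ar2 (p q : R) (a b : \bar R) : -oo < a -> -oo < b ->
  a + b = (p - q)%:E -> q%:E + a <= p%:E - b.
Proof.
case: a => [r| |] //; case: b => [s| |] //= _ _.
rewrite -!EFinD lee_fin => -[]; lra.
Qed.
End Main.

Theorem proposition5p6 (R : realType) (n : nat) (T : R)
  (H : 'rV[R]_n -> 'rV[R]_n -> R) (M : R) (g0 gT : 'rV[R]_n -> R)
  (xb : R -> 'rV[R]_n) :
  0 < T ->
  (forall (x p q : 'rV[R]_n) (l : R), 0 <= l <= 1 ->
     H x (l *: p + (1 - l) *: q) <= l * H x p + (1 - l) * H x q) ->
  0 <= M ->
  (forall x p q : 'rV[R]_n,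
     `|H x p - H x q| <= M * (1 + enorm x) * enorm (p - q)) ->
  (forall x y p : 'rV[R]_n,
     `|H x p - H y p| <= M * (1 + enorm p) * enorm (x - y)) ->
  continuous g0 -> continuous gT ->
  bolza_max_opt H g0 T xb ->
  (forall x : 'rV[R]_n, valU H g0 T x = valW H gT T T x) ->
  inv_bolza_max_opt H gT T xb /\
  (forall t : R, 0 <= t <= T -> valU H g0 t (xb t) = valW H gT T t (xb t)).
Proof.
move=> T0 _ M0 _ HLx _ _ [acxb bolza] UW.
have WT : forall x0, valW H gT T T x0 = (gT x0)%:E.
  move=> x0; rewrite /valW; apply/eqP; rewrite eq_le; apply/andP; split.
  - by apply: ge_ereal_sup => _ [x [_ xT] <-]; rewrite action_pt sube0 xT.
  - apply: ereal_sup_ubound; exists (fun _ => x0); first by split; [exact: ac_cst|].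
    by rewrite action_pt sube0.
have U0 : forall x0, valU H g0 0 x0 = (g0 x0)%:E.
  move=> x0; rewrite /valU; apply/eqP; rewrite eq_le; apply/andP; split.
  - apply: ereal_inf_lbound; exists (fun _ => x0); first by split; [exact: ac_cst|].
    by rewrite action_pt adde0.
  - by apply: le_ereal_inf_tmp => _ [x [_ x0'] <-]; rewrite action_pt adde0 x0'.
have A0T : action H 0 T xb = (gT (xb T) - g0 (xb 0))%:E.
  move: bolza; rewrite UW WT U0.
  case: (action H 0 T xb) => [r| |] //= e.
  by move: e; rewrite -EFinD => -[->]; congr EFin; rewrite addrC addKr.
have main : forall t : R, 0 <= t <= T -> valU H g0 t (xb t) = valW H gT T t (xb t).
  move=> t /andP[t0 tT].
  have acxt1 : abs_cont 0 t xb := ac_sub _ _ _ _ _ acxb (lexx 0) tT.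
  have acxt2 : abs_cont t T xb := ac_sub _ _ _ _ _ acxb t0 (lexx T).
  apply/eqP; rewrite eq_le; apply/andP; split.
  - apply: le_trans (ereal_inf_lbound _) _.
      by exists xb => //; split.
    apply: le_trans _ (ereal_sup_ubound _); last by exists xb => //; split.
    apply: ar2; [exact: action_gtNy _ _ M0 HLx _ _ _ acxt1|exact: action_gtNy _ _ M0 HLx _ _ _ acxt2|].
    by rewrite -(action_split _ _ M0 HLx _ _ _ acxb t0 tT).
  - apply: ge_ereal_sup => _ [y [acy yt] <-].
    apply: le_ereal_inf_tmp => _ [z [acz zt] <-].
    have zy : z t = y t by rewrite zt yt.
    pose w := fun s => if (s <= t)%R then z s else y s.
    have acw : abs_cont 0 T w := ac_concat _ _ _ _ _ t0 tT acz acy zy.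
    have wT : w T = y T.
      rewrite /w; case: ifP => // Tt.
      by have -> : T = t by apply/le_anti; rewrite Tt tT.
    have w0 : w 0 = z 0 by rewrite /w t0.
    have hU : (valU H g0 T (w T) <= (g0 (w 0))%:E + action H 0 T w)%E.
      by apply: ereal_inf_lbound; exists w.
    rewrite wT UW WT w0 (action_concat _ _ M0 HLx _ _ _ _ t0 tT acz acy zy) in hU.
    apply: ar1 hU; [exact: action_gtNy _ _ M0 HLx _ _ _ acz|exact: action_gtNy _ _ M0 HLx _ _ _ acy].
split => //.
split => //.
rewrite -main; last by rewrite lexx ltW.
by rewrite U0 WT A0T -EFinB; congr EFin; rewrite opprB addrC subrK.
Qed.
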